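(* Assume $\Lambda(\mathbf{f}_i,P)$ is a nonnegative integer for every $i$ and every $P\in\mathcal{U}$, and let $M=N\max_{i,P\in\mathcal{U}}\Lambda(\mathbf{f}_i,P)$. Let $\kappa^*\in\arg\max_{1\le\kappa\le M}\kappa/N_\kappa$. Then $\frac{\kappa^*}{N_{\kappa^*}}\ge\min_{P\in\mathcal{U}}\Lambda(w^*_N,P)\ge\frac{N_0}{N_0+1}\min_{P\in\mathcal{U}}\Lambda(w^*,P)$.
   Context: Setting: a simple directed acyclic graph $G=(V,E)$ with capacities $C\in\mathbb{R}_{\ge0}^E$, $s,t$ joined by a directed path, budget $0<\gamma\le\min_eC(e)$, and an uncertainty set $\mathcal{U}$ of finitely many sets $P$ of user paths (directed paths $p_1,\dots,p_k$ with initial values $\lambda_i\ge0$, $\sum_{i:e\in p_i}\lambda_i\le C(e)$). For an $s$-$t$ flow $\mathbf{f}$ ($0\le\mathbf{f}\le C$, conservation at $v\ne s,t$), $T(\mathbf{f},P)$ is the optimal value of: maximize $\sum_i\tilde\lambda_i$ s.t. $\sum_{i:e\in p_i}\tilde\lambda_i\le C(e)-\mathbf{f}(e)$, $0\le\tilde\lambda_i\le\lambda_i$; $\Lambda(\mathbf{f},P)=\sum_i\lambda_i-T(\mathbf{f},P)$; for a strategy (probability distribution) $w$, $\Lambda(w,P)=\sum_{\mathbf{f}}w(\mathbf{f})\Lambda(\mathbf{f},P)$. Let $\mathbf{f}_1,\dots,\mathbf{f}_L$ enumerate the single-path flows of value $\gamma$ (for each directed $s$-$t$ path, the flow equal to $\gamma$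 on its edges and $0$ elsewhere). Fix a positive integer $N_0$; an $N_0$-bounded strategy is a probability distribution on $\{\mathbf{f}_1,\dots,\mathbf{f}_L\}$ with at most $N_0$ nonzero probabilities, and $w^*$ is one maximizing $\min_{P\in\mathcal{U}}\Lambda(w,P)$ among them. Let $N=N_0^2+N_0$, $\mathcal{W}_N$ the set of probability distributions on $\{\mathbf{f}_1,\dots,\mathbf{f}_L\}$ all of whose probabilities lie in $\{\beta/N:\beta\in\{0,\dots,N\}\}$, and $w^*_N$ one maximizing $\min_{P\in\mathcal{U}}\Lambda(w,P)$ over $\mathcal{W}_N$. For a positive integer $\kappa$, $ILP(\kappa)$ is: minimize $\sum_ix_i$ subject to $\sum_ix_i\Lambda(\mathbf{f}_i,P)\ge\kappa$ for all $P\in\mathcal{U}$, $x_i\in\mathbb{N}$; $N_\kappa$ is its optimal value. *)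

(* Defs.v *)
From HB Require Import structures.
From mathcomp Require Import all_boot all_order all_algebra.
From mathcomp Require Import classical_sets reals.
Set Implicit Arguments. Unset Strict Implicit. Unset Printing Implicit Defensive.
Import Order.TTheory GRing.Theory Num.Theory.
Local Open Scope ring_scope.
Local Open Scope classical_set_scope.

Section NetworkDefs.
Variables (R : realType) (V : finType) (E : rel V).

Definition pedges (p : seq V) : seq (V * V) := zip p (behead p).

Definition is_dpath (p : seq V) : bool :=
  if p is x :: q then path E x q && uniq p else false.

(* simple digraph: no loops (a relation has no multiple edges) *)
Definition simple_graph : Prop := forall v, ~~ E v v.

Definition acyclic : Prop :=
  forall x (p : seq V), p != [::] -> path E x p -> last x p != x.

Definition is_stpath (s t : V) (p : seq V) : bool :=
  if p is x :: q then [&& x == s, path E x q, last x q == t & uniq p] else false.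

(* finite type of vertex sequences of length at most #|V| (contains all paths) *)
Definition pathT := {n : 'I_#|V|.+1 & n.-tuple V}.
Definition pseq (p : pathT) : seq V := tagged p.

Definition stpaths (s t : V) : {set pathT} := [set p : pathT | is_stpath s t (pseq p)].

Definition pflow (gamma : R) (p : seq V) : V -> V -> R :=
  fun u v => if (u, v) \in pedges p then gamma else 0.

(* a set P of user paths: list of (path, initial value lambda) *)
Definition userset := seq (seq V * R).

Definition valid_userset (C : V -> V -> R) (P : userset) : Prop :=
  (forall q, q \in P -> is_dpath q.1 /\ 0 <= q.2) /\
  (forall u v, E u v -> \sum_(q <- P | (u, v) \in pedges q.1) q.2 <= C u v).

Definition udef : seq V * R := ([::], 0).

(* T(f,P): optimal value of the LP  max sum_i lt_i  s.t. edge capacities and 0 <= lt_i <= lambda_i *)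
Definition Tval (C : V -> V -> R) (f : V -> V -> R) (P : userset) : R :=
  sup [set x : R | exists lt : 'I_(size P) -> R,
        (forall i, 0 <= lt i <= (nth udef P i).2) /\
        (forall u v, E u v ->
           \sum_(i < size P | (u, v) \in pedges (nth udef P i).1) lt i <= C u v - f u v) /\
        x = \sum_(i < size P) lt i].

Definition Lam (C : V -> V -> R) (f : V -> V -> R) (P : userset) : R :=
  \sum_(q <- P) q.2 - Tval C f P.

Definition Lamw (C : V -> V -> R) (s t : V) (gamma : R) (w : pathT -> R) (P : userset) : R :=
  \sum_(p in stpaths s t) w p * Lam C (pflow gamma (pseq p)) P.

Definition minU (U : seq userset) (g : userset -> R) : R :=
  \big[Num.min/g (head [::] U)]_(P <- U) g P.

Definition is_strategy (s t : V) (w : pathT -> R) : Prop :=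
  (forall p, 0 <= w p) /\ (forall p, p \notin stpaths s t -> w p = 0) /\
  \sum_(p in stpaths s t) w p = 1.

Definition bounded_strategy (s t : V) (N0 : nat) (w : pathT -> R) : Prop :=
  is_strategy s t w /\ (#|[set p | w p != 0%R]| <= N0)%N.

Definition in_WN (s t : V) (N : nat) (w : pathT -> R) : Prop :=
  is_strategy s t w /\ forall p, exists beta : nat, (beta <= N)%N /\ w p = beta%:R / N%:R.

Definition Nkappa (C : V -> V -> R) (s t : V) (gamma : R) (U : seq userset) (kappa : nat) : R :=
  inf [set y : R | exists x : pathT -> nat,
        (forall P, P \in U ->
           kappa%:R <= \sum_(p in stpaths s t) (x p)%:R * Lam C (pflow gamma (pseq p)) P) /\
        y = (\sum_(p in stpaths s t) x p)%:R].

Definition Mbound (C : V -> V -> R) (s t : V) (gamma : R) (U : seq userset) (N : nat) : R :=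
  N%:R * \big[Num.max/0]_(p in stpaths s t)
           \big[Num.max/0]_(P <- U) Lam C (pflow gamma (pseq p)) P.

End NetworkDefs.

(* Main.v *)
Require Import Defs.
From HB Require Import structures.
From mathcomp Require Import all_boot all_order all_algebra.
From mathcomp Require Import boolp classical_sets reals.
From mathcomp Require Import ring lra zify.
Import Order.TTheory GRing.Theory Num.Theory.
Local Open Scope ring_scope.

Section H.
Variable R : realType.

Lemma hbigmin_le (X : eqType) (r : seq X) (x0 : R) (g : X -> R) P :
  P \in r -> \big[Num.min/x0]_(Q <- r) g Q <= g P.
Proof.
elim: r => //= a r IH; rewrite in_cons big_cons => /orP[/eqP->|/IH h].
  by rewrite ge_min lexx.
by rewrite ge_min h orbT.
Qed.

Lemma hbigmin_in (X : eqType) (r : seq X) (x0 : R) (g : X -> R) :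
  \big[Num.min/x0]_(Q <- r) g Q = x0 \/
  exists2 P, P \in r & \big[Num.min/x0]_(Q <- r) g Q = g P.
Proof.
elim: r => [|a r IH]; first by left; rewrite big_nil.
rewrite big_cons /Order.min; case: ifPn => h.
  by right; exists a; rewrite ?mem_head.
case: IH => [->|[P hP ->]]; first by left.
by right; exists P => //; rewrite in_cons hP orbT.
Qed.

Lemma minU_le (V : finType) (U : seq (userset R V)) g P :
  P \in U -> minU U g <= g P.
Proof. exact: hbigmin_le. Qed.

Lemma minU_in (V : finType) (U : seq (userset R V)) g :
  U != [::] -> exists2 P, P \in U & minU U g = g P.
Proof.
move=> hU; rewrite /minU; case: (hbigmin_in _ U (g (head [::] U)) g) => [->|//].
by exists (head [::] U) => //; case: U hU => // a r _; rewrite mem_head.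
Qed.

Lemma sum_nat_ex (I : finType) (A : pred I) (F : I -> R) :
  (forall i, A i -> exists n : nat, F i = n%:R) ->
  exists n : nat, \sum_(i in A) F i = n%:R.
Proof.
move=> h; apply: (big_ind (fun x => exists n : nat, x = n%:R)).
- by exists 0%N.
- by move=> x y [a ->] [b ->]; exists (a + b)%N; rewrite natrD.
- exact: h.
Qed.

Lemma hle_bigmax_seq (X : eqType) (r : seq X) (P : pred X) (F : X -> R) x0 i :
  i \in r -> P i -> F i <= \big[Num.max/x0]_(j <- r | P j) F j.
Proof.
elim: r => //= a r IH; rewrite in_cons big_cons => /orP[/eqP<-|/IH h] Pi.
  by rewrite Pi le_max lexx.
by case: (P a); rewrite ?le_max h ?orbT.
Qed.

Lemma hle_bigmax_fin (X : finType) (A : pred X) (F : X -> R) x0 i :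
  i \in A -> F i <= \big[Num.max/x0]_(j in A) F j.
Proof. by move=> hi; apply: hle_bigmax_seq => //; rewrite mem_index_enum. Qed.

Local Open Scope classical_set_scope.
Lemma sum_nz_card (T : finType) (w : T -> R) (A : pred T) : (\sum_(p in A) (w p != 0%R : nat) <= #|[set p | w p != 0%R]|)%N.
Proof.
apply: (@leq_trans (\sum_p (w p != 0%R : nat))%N).
  by rewrite [X in (_ <= X)%N](bigID A) /= leq_addr.
rewrite (eq_bigr (fun p => if w p != 0%R then 1%N else 0%N)); last by move=> p _; case: ifP.
rewrite -big_mkcond /= sum1_card; apply/eq_leq/eq_card => p.
rewrite unfold_in /=. by apply/idP/idP; rewrite ?in_setE. 

Qed.

End H.

Lemma part1 (R : realType) (V : finType) (E : rel V)
  (C : V -> V -> R) (s t : V) (gamma : R) (U : seq (userset R V)) (N0 : nat)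
  (wN : pathT V -> R) (kstar : nat) :
  (forall p, p \in stpaths E s t -> forall P, P \in U ->
     exists n : nat, Lam E C (pflow gamma (pseq p)) P = n%:R) ->
  U != [::] -> (0 < N0)%N -> in_WN E s t (N0 ^ 2 + N0) wN ->
  (forall kappa : nat, 1 <= (kappa%:R : R) <= Mbound E C s t gamma U (N0 ^ 2 + N0) ->
     kappa%:R / Nkappa E C s t gamma U kappa <=
     kstar%:R / Nkappa E C s t gamma U kstar) ->
  minU U (fun P => Lamw E C s t gamma wN P) <= kstar%:R / Nkappa E C s t gamma U kstar.
Proof.
move=> Lnat Une N0pos [[w0 [wout wsum]] wbeta] kopt.
set A := stpaths E s t.
set N := (N0 ^ 2 + N0)%N.
have Ngt0 : (0 < N)%N by rewrite /N addn_gt0 N0pos orbT.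
have NRgt0 : (0 : R) < N%:R by rewrite ltr0n.
have Lge0 : forall p, p \in A -> forall P, P \in U ->
    0 <= Lam E C (pflow gamma (pseq p)) P.
  by move=> p hp P hP; have [n ->] := Lnat p hp P hP; exact: ler0n.
have Nk_ge0 : forall k, 0 <= Nkappa E C s t gamma U k.
  move=> k; rewrite /Nkappa.
  set Sx := (X in inf X).
  case: (pselect (exists y, Sx y)) => [ne|e].
    by apply: lb_le_inf ne _ => y [x [_ ->]]; exact: ler0n.
  by rewrite inf_out // => -[].
pose x p := Num.truncn (N%:R * wN p).
have hx : forall p, (x p)%:R = N%:R * wN p.
  move=> p; rewrite /x; have [b [_ ->]] := wbeta p.
  by rewrite mulrC divfK ?lt0r_neq0 // natrK.
have [P0 hP0 eqm] := @minU_in _ _ U (fun P => Lamw E C s t gamma wN P) Une.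
have [n0 hn0] : exists n0 : nat, N%:R * Lamw E C s t gamma wN P0 = n0%:R.
  rewrite /Lamw mulr_sumr; apply: sum_nat_ex => p hp; rewrite mulrA -hx.
  by have [n ->] := Lnat p hp P0 hP0; exists (x p * n)%N; rewrite natrM.
rewrite eqm.
have mE : Lamw E C s t gamma wN P0 = n0%:R / N%:R.
  by rewrite -hn0; field; exact: lt0r_neq0.
case: n0 hn0 mE => [|n0] hn0 mE.
  by rewrite mE mul0r divr_ge0 ?ler0n ?Nk_ge0.
set k := n0.+1.
have hk1 : 1 <= (k%:R : R) by rewrite ler1n.
have hkM : (k%:R : R) <= Mbound E C s t gamma U N.
  rewrite -hn0 /Mbound ler_wpM2l ?ler0n //.
  set Mx := \big[Num.max/0]_(p in A) _.
  apply: (le_trans (y := \sum_(p in A) wN p * Mx)).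
    rewrite /Lamw; apply: ler_sum => p hp; rewrite ler_wpM2l //.
    have h := (@hle_bigmax_seq R _ (index_enum (pathT V)) (fun p => p \in A) (fun p => \big[Num.max/0]_(P <- U) Lam E C (pflow gamma (pseq p)) P) 0 p (mem_index_enum p) hp). apply: (le_trans _ h).
    exact: (@hle_bigmax_seq _ _ U xpredT).
  by rewrite -mulr_suml wsum mul1r.
apply: le_trans (kopt k _); last by rewrite hk1 hkM.
have feasx : forall P, P \in U ->
    k%:R <= \sum_(p in A) (x p)%:R * Lam E C (pflow gamma (pseq p)) P.
  move=> P hP; rewrite -hn0.
  apply: (le_trans (y := N%:R * Lamw E C s t gamma wN P)).
    by rewrite ler_wpM2l ?ler0n // -eqm; exact: minU_le.
  by rewrite /Lamw mulr_sumr; apply: ler_sum => p hp; rewrite mulrA -hx.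
have sumx : (\sum_(p in A) x p)%:R = (N%:R : R).
  rewrite natr_sum; under eq_bigr do rewrite hx; by rewrite -mulr_sumr wsum mulr1.
have inS : [set y : R | exists x : pathT V -> nat,
        (forall P, P \in U ->
           k%:R <= \sum_(p in stpaths E s t) (x p)%:R * Lam E C (pflow gamma (pseq p)) P) /\
        y = (\sum_(p in stpaths E s t) x p)%:R]%classic N%:R.
  by exists x; split => //; rewrite sumx.
have Nk_le : Nkappa E C s t gamma U k <= N%:R.
  apply: (ge_inf _ inS); exists 0 => y [x' [_ ->]]; exact: ler0n.
have Nk_ge1 : 1 <= Nkappa E C s t gamma U k.
  apply: lb_le_inf; first by exists N%:R.
  move=> y [x' [hf ->]]; rewrite ler1n lt0n; apply/negP => /eqP h0.
  move/eqP: h0; rewrite sum_nat_eq0 => /forall_inP h.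
  have := hf P0 hP0; rewrite big1; first by rewrite lern0.
  by move=> p hp; rewrite (eqP (h p hp)) mul0r.
rewrite mE ler_wpM2l ?ler0n // lef_pV2 ?posrE //.
exact: lt_le_trans ltr01 Nk_ge1.
Qed.

Lemma part2 (R : realType) (V : finType) (E : rel V)
  (C : V -> V -> R) (s t : V) (gamma : R) (U : seq (userset R V)) (N0 : nat)
  (ws wN : pathT V -> R) :
  (forall p, p \in stpaths E s t -> forall P, P \in U ->
     0 <= Lam E C (pflow gamma (pseq p)) P) ->
  U != [::] -> (0 < N0)%N -> bounded_strategy E s t N0 ws ->
  (forall w, in_WN E s t (N0 ^ 2 + N0) w ->
     minU U (fun P => Lamw E C s t gamma w P) <= minU U (fun P => Lamw E C s t gamma wN P)) ->
  N0%:R / (N0%:R + 1) * minU U (fun P => Lamw E C s t gamma ws P)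
    <= minU U (fun P => Lamw E C s t gamma wN P).
Proof.
move=> Lge0 Une N0pos [[ws0 [wsout wssum]] wscard] wNopt.
set A := stpaths E s t.
set N := (N0 ^ 2 + N0)%N.
have Ngt0 : (0 < N)%N by rewrite /N addn_gt0 N0pos orbT.
have NR : (N%:R : R) = N0%:R * (N0%:R + 1) by rewrite /N natrD natrX; ring.
have NRgt0 : (0 : R) < N%:R by rewrite ltr0n.
pose cp p : nat := if ws p != 0 then (Num.truncn (N0%:R ^+ 2 * ws p)).+1 else 0%N.
set S := (\sum_(p in A) cp p)%N.
have cp_out : forall p, p \notin A -> cp p = 0%N.
  by move=> p hp; rewrite /cp wsout // eqxx.
have cp_ge : forall p, N0%:R ^+ 2 * ws p <= (cp p)%:R.
  move=> p; rewrite /cp; case: ifPn => [_|]; first exact: ltW (truncnS_gt _).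
  by rewrite negbK => /eqP ->; rewrite mulr0.
have SleN : (S <= N)%N.
  have h1 : (S <= \sum_(p in A) Num.truncn (N0%:R ^+ 2 * ws p) + \sum_(p in A) (ws p != 0%R : nat))%N.
    rewrite -big_split /=; apply: leq_sum => p _; rewrite /cp.
    by case: ifPn => //= _; rewrite addn1.
  have h2 : (\sum_(p in A) Num.truncn (N0%:R ^+ 2 * ws p) <= N0 ^ 2)%N.
    rewrite -(ler_nat R) natr_sum natrX.
    apply: (le_trans (y := \sum_(p in A) N0%:R ^+ 2 * ws p)).
      by apply: ler_sum => p _; rewrite truncn_le mulr_ge0 ?exprn_ge0 ?ler0n.
    by rewrite -mulr_sumr wssum mulr1.
  have h3 : (\sum_(p in A) (ws p != 0%R : nat) <= N0)%N.
    apply: leq_trans wscard; exact: sum_nz_card.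
  by apply: leq_trans h1 _; rewrite /N leq_add.
have [A0 | [p0 hp0]] := set_0Vmem A.
  by move: wssum; rewrite -/A A0 big_set0 => /eqP; rewrite eq_sym oner_eq0.
have cpS : forall p, p \in A -> (cp p <= S)%N.
  by move=> p hp; rewrite /S (bigD1 p) //= leq_addr.
pose w p : R := ((cp p + (if p == p0 then (N - S)%N else 0%N))%N)%:R / N%:R.
have wWN : in_WN E s t N w.
  split; [split; [|split]|].
  - by move=> p; rewrite /w divr_ge0 ?ler0n.
  - move=> p hp; rewrite /w cp_out //.
    have -> : (p == p0) = false by apply/negbTE; apply: contraNneq hp => ->.
    by rewrite add0n mul0r.
  - rewrite -mulr_suml -natr_sum big_split /= -/S.
    rewrite (bigD1 p0) //= eqxx big1 ?addn0; last by move=> p /andP[_ /negbTE ->].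
    by rewrite subnKC // divff // lt0r_neq0.
  - move=> p; exists (cp p + (if p == p0 then (N - S)%N else 0%N))%N; split => //.
    case: eqP => [->|_].
      by have := cpS _ hp0; move: SleN; clearbody S cp; lia.
    rewrite addn0; case: (boolP (p \in A)) => hp; first exact: leq_trans (cpS _ hp) SleN.
    by rewrite cp_out.
have N0R : (N0%:R : R) != 0 by rewrite pnatr_eq0 -lt0n.
have N01R : (N0%:R + 1 : R) != 0 by rewrite -[1]/(1%:R) -natrD pnatr_eq0 addn1.
have wge : forall p, p \in A -> N0%:R / (N0%:R + 1) * ws p <= w p.
  move=> p hp; rewrite /w natrD.
  have -> : N0%:R / (N0%:R + 1) * ws p = (N0%:R ^+ 2 * ws p) / N%:R.
    by rewrite NR; field; rewrite N0R N01R.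
  rewrite ler_wpM2r ?invr_ge0 ?ler0n //; apply: le_trans (cp_ge p) _.
  by rewrite lerDl ler0n.
have [P1 hP1 eq1] := @minU_in _ _ U (fun P => Lamw E C s t gamma w P) Une.
apply: le_trans (wNopt w wWN); rewrite eq1.
apply: (le_trans (y := N0%:R / (N0%:R + 1) * Lamw E C s t gamma ws P1)).
  rewrite ler_wpM2l ?divr_ge0 ?ler0n ?addr_ge0 //; exact: minU_le.
rewrite /Lamw mulr_sumr; apply: ler_sum => p hp; rewrite mulrA ler_wpM2r //.
  exact: Lge0.
exact: wge.
Qed.

Theorem lemma5 (R : realType) (V : finType) (E : rel V)
  (C : V -> V -> R) (s t : V) (gamma : R) (U : seq (userset R V)) (N0 : nat)
  (wstar wNstar : pathT V -> R) (kstar : nat) :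
  simple_graph E -> acyclic E ->
  (forall u v, E u v -> 0 <= C u v) ->
  (exists p : seq V, is_stpath E s t p) ->
  0 < gamma -> (forall u v, E u v -> gamma <= C u v) ->
  U != [::] -> (forall P, P \in U -> valid_userset E C P) ->
  (forall p, p \in stpaths E s t -> forall P, P \in U ->
     exists n : nat, Lam E C (pflow gamma (pseq p)) P = n%:R) ->
  (0 < N0)%N ->
  let N := (N0 ^ 2 + N0)%N in
  let LamW w P := Lamw E C s t gamma w P in
  bounded_strategy E s t N0 wstar ->
  (forall w, bounded_strategy E s t N0 w ->
     minU U (LamW w) <= minU U (LamW wstar)) ->
  in_WN E s t N wNstar ->
  (forall w, in_WN E s t N w -> minU U (LamW w) <= minU U (LamW wNstar)) ->
  let M := Mbound E C s t gamma U N in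
  1 <= (kstar%:R : R) <= M ->
  (forall kappa : nat, 1 <= (kappa%:R : R) <= M ->
     kappa%:R / Nkappa E C s t gamma U kappa <=
     kstar%:R / Nkappa E C s t gamma U kstar) ->
  kstar%:R / Nkappa E C s t gamma U kstar >= minU U (LamW wNstar) /\
  minU U (LamW wNstar) >= N0%:R / (N0%:R + 1) * minU U (LamW wstar).
Proof.
move=> _ _ _ _ _ _ Une Uval Lnat N0pos N LamW bws _ wN wNopt M kst kopt.
have Lge0 : forall p, p \in stpaths E s t -> forall P, P \in U ->
    0 <= Lam E C (pflow gamma (pseq p)) P.
  by move=> p hp P hP; have [n ->] := Lnat p hp P hP; exact: ler0n.
split.
- exact: (part1 _ _ _ _ _ _ _ _ _ _ _ Lnat Une N0pos wN kopt).
- exact: (part2 _ _ _ _ _ _ _ _ _ _ _ Lge0 Une N0pos bws wNopt).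
Qed.
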